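(* Let $F\in\{\mathbb{R},\mathbb{C}\}$. (1) Let $\Theta$ satisfy $\cos\Theta>0$ (for $F=\mathbb{R}$, $\Theta=0$). For $a,b\in F$ define $$a+_{\infty,\Theta}b=\lim_{|\alpha|\to\infty,\ \arg\alpha=\Theta}\epsilon_\alpha^{-1}\big(\epsilon_\alpha(a)+\epsilon_\alpha(b)\big).$$ Then $(F,+_{\infty,\Theta},\cdot)$ is a non-associative field. Moreover, for $a_1,\dots,a_n\in F$, writing $a_t=|a_t|e^{i\theta_t}$, $[n]_k=\{t\in[n]:|a_t|=|a_k|\}$ and $\sum_{t\in[n]_k}e^{i\theta_t}=r_ks_k$ with $r_k\ge0$, $|s_k|=1$, the limit $${}^{\infty,\Theta}\!\sum_{k\in[n]}a_k:=\lim_{|\alpha|\to\infty,\ \arg\alpha=\Theta}\epsilon_\alpha^{-1}\Big(\sum_{k\in[n]}\epsilon_\alpha(a_k)\Big)$$ equals $|a_M|\,r_M^{-i\tan\Theta}s_M$ if there is $M\in[n]$ with $|a_M|=\max\{|a_k|: k\in[n],\ a_k\neq0,\ r_k\neq0\}$, and equals $0$ otherwise. (2) Let $\Theta$ satisfy $\cos\Theta<0$ (for $F=\mathbb{R}$, $\Theta=\pi$). Define $a+_{-\infty,\Theta}b$ by the same limit with $|\alpha|\to\infty$, $\arg\alpha=\Theta$ (so $\mathrm{Re}\,\alpha\to-\infty$). Then $(F,+_{-\infty,\Theta},\cdot)$ is a non-associative field, and, with the same notation, the corresponding limit ${}^{-\infty,\Theta}\!\sum_{k\in[n]}a_k$ equals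 $|a_m|\,r_m^{-i\tan\Theta}s_m$ if there is $m\in[n]$ with $|a_m|=\min\{|a_k|:k\in[n],\ a_k\neq0,\ r_k\neq0\}$, and equals $0$ otherwise.
   Context: For $\alpha\in\mathbb{C}\setminus i\mathbb{R}$, $\epsilon_\alpha:\mathbb{C}\to\mathbb{C}$ is defined by $\epsilon_\alpha(0)=0$ and $\epsilon_\alpha(rs)=r^\alpha s=e^{\alpha\ln r}s$ for $r>0$, $|s|=1$; it is a multiplicative automorphism with inverse $\epsilon_\alpha^{-1}(\rho t)=\rho^{(1-i\,\mathrm{Im}\alpha)/\mathrm{Re}\alpha}t$. For real $\alpha\neq0$, $\epsilon_\alpha:\mathbb{R}\to\mathbb{R}$ is $x\mapsto\mathrm{sgn}(x)|x|^\alpha$. A non-associative field is a structure $(F,+,\cdot)$ satisfying all field axioms except that addition is not required to be associative. *)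

(* Defs.v *)
From Stdlib Require Import Reals Lra.
From Coquelicot Require Import Coquelicot.
Open Scope R_scope.

(* A non-associative field: all field axioms except associativity of addition. *)
Definition nonassoc_field {T : Type} (add mul : T -> T -> T) : Prop :=
  exists zero one : T,
    zero <> one /\
    (forall a b, add a b = add b a) /\
    (forall a, add zero a = a) /\
    (forall a, exists b, add a b = zero) /\
    (forall a b c, mul a (mul b c) = mul (mul a b) c) /\
    (forall a b, mul a b = mul b a) /\
    (forall a, mul one a = a) /\
    (forall a, a <> zero -> exists b, mul a b = one) /\
    (forall a b c, mul a (add b c) = add (mul a b) (mul a c)).

(* M < n is an index with v M = the extremum (w.r.t. [le]: Rle gives the max,
   Rge gives the min) of the set { v k | k < n, P k }. *)
Definition extr_idx (le : R -> R -> Prop) (P : nat -> Prop) (v : nat -> R)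
  (n M : nat) : Prop :=
  (M < n)%nat /\
  (exists k, (k < n)%nat /\ P k /\ v k = v M) /\
  (forall k, (k < n)%nat -> P k -> le (v k) (v M)).

Definition cis (t : R) : C := (cos t, sin t).
Definition cexpc (z : C) : C := (exp (Re z) * cos (Im z), exp (Re z) * sin (Im z)).
Definition cpowr (r : R) (beta : C) : C := cexpc (beta * RtoC (ln r))%C.
Definition cunit (z : C) : C :=
  if Req_EM_T (Cmod z) 0 then RtoC 0 else (z / RtoC (Cmod z))%C.

Definition ceps (alpha z : C) : C :=
  if Req_EM_T (Cmod z) 0 then RtoC 0 else (cpowr (Cmod z) alpha * cunit z)%C.
Definition ceps_inv (alpha w : C) : C :=
  if Req_EM_T (Cmod w) 0 then RtoC 0
  else (cpowr (Cmod w) ((RtoC 1 - Ci * RtoC (Im alpha)) / RtoC (Re alpha)) * cunit w)%C.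

(* f(alpha) -> L as |alpha| -> infinity with arg alpha = Theta,
   i.e. alpha = rho e^{i Theta}, rho -> +infinity *)
Definition clim (Theta : R) (f : C -> C) (L : C) : Prop :=
  filterlim (fun rho : R => f (RtoC rho * cis Theta)%C) (Rbar_locally p_infty) (locally L).

Fixpoint csum (f : nat -> C) (n : nat) : C :=
  match n with O => RtoC 0 | S m => (csum f m + f m)%C end.

Definition cS (a : nat -> C) (n k : nat) : C :=
  csum (fun t => if Req_EM_T (Cmod (a t)) (Cmod (a k)) then cunit (a t) else RtoC 0) n.
Definition cr (a : nat -> C) (n k : nat) : R := Cmod (cS a n k).
Definition cs (a : nat -> C) (n k : nat) : C := cunit (cS a n k).

Definition cadm (a : nat -> C) (n : nat) (k : nat) : Prop := a k <> RtoC 0 /\ cr a n k <> 0.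

Definition cvalue (Theta : R) (a : nat -> C) (n M : nat) : C :=
  (RtoC (Cmod (a M)) * cpowr (cr a n M) (- (Ci * RtoC (tan Theta))) * cs a n M)%C.

Definition rsgn (x : R) : R := if Req_EM_T x 0 then 0 else x / Rabs x.
Definition reps (alpha x : R) : R :=
  if Req_EM_T x 0 then 0 else rsgn x * Rpower (Rabs x) alpha.
Definition reps_inv (alpha y : R) : R := reps (/ alpha) y.

Fixpoint rsum (f : nat -> R) (n : nat) : R :=
  match n with O => 0 | S m => rsum f m + f m end.

Definition rS (a : nat -> R) (n k : nat) : R :=
  rsum (fun t => if Req_EM_T (Rabs (a t)) (Rabs (a k)) then rsgn (a t) else 0) n.
Definition rr (a : nat -> R) (n k : nat) : R := Rabs (rS a n k).
Definition rs (a : nat -> R) (n k : nat) : R := rsgn (rS a n k).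
Definition radm (a : nat -> R) (n : nat) (k : nat) : Prop := a k <> 0 /\ rr a n k <> 0.

(* Main.v *)
Require Import Defs.
From Stdlib Require Import Reals Lra Lia Classical ClassicalEpsilon ClassicalDescription.
From Coquelicot Require Import Coquelicot.
Open Scope R_scope.

Definition ifP (P : Prop) (x y : C) : C := if excluded_middle_informative P then x else y.

Lemma C_ext (x y : C) : fst x = fst y -> snd x = snd y -> x = y.
Proof. destruct x, y; simpl; intros; subst; reflexivity. Qed.

Lemma cexpc_plus z w : cexpc (z + w)%C = (cexpc z * cexpc w)%C.
Proof.
  destruct z as [x y], w as [u v]. unfold cexpc, Re, Im; simpl.
  apply C_ext; simpl.
  - rewrite exp_plus, cos_plus; ring.
  - rewrite exp_plus, sin_plus; ring.
Qed.

Lemma cexpc_R x : cexpc (RtoC x) = RtoC (exp x).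
Proof. unfold cexpc, RtoC, Re, Im; simpl. rewrite cos_0, sin_0. apply C_ext; simpl; ring. Qed.

Lemma cexpc_split p q : cexpc (p, q) = (RtoC (exp p) * cexpc (0, q))%C.
Proof. unfold cexpc, RtoC, Re, Im; simpl. rewrite exp_0. apply C_ext; simpl; ring. Qed.

Lemma Cmod_cexpc z : Cmod (cexpc z) = exp (Re z).
Proof.
  destruct z as [x y]. unfold cexpc, Cmod, Re, Im; simpl fst; simpl snd.
  replace ((exp x * cos y) ^ 2 + (exp x * sin y) ^ 2) with (exp x ^ 2).
  - apply sqrt_pow2. left; apply exp_pos.
  - pose proof (sin2_cos2 y) as H. unfold Rsqr in H.
    replace (exp x ^ 2) with (exp x ^ 2 * (sin y * sin y + cos y * cos y)) by (rewrite H; ring).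
    ring.
Qed.

Lemma cunit_0 z : Cmod z = 0 -> cunit z = RtoC 0.
Proof. intro H. unfold cunit. destruct Req_EM_T; [reflexivity | contradiction]. Qed.

Lemma cunit_eq z : Cmod z <> 0 -> cunit z = (RtoC (/ Cmod z) * z)%C.
Proof.
  intro H. unfold cunit. destruct Req_EM_T; [contradiction|].
  destruct z as [x y]. unfold Cdiv, Cinv, RtoC; simpl. apply C_ext; simpl; field; auto.
Qed.

Lemma Cmod_RtoC_pos r : 0 <= r -> Cmod (RtoC r) = r.
Proof. intro. rewrite Cmod_R. apply Rabs_pos_eq; auto. Qed.

Lemma Cmod_cunit z : Cmod z <> 0 -> Cmod (cunit z) = 1.
Proof.
  intro H. rewrite cunit_eq; auto. rewrite Cmod_mult, Cmod_R.
  pose proof (Cmod_ge_0 z).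
  rewrite Rabs_pos_eq. field; auto. left; apply Rinv_0_lt_compat; lra.
Qed.

Lemma Cmod_cunit_le z : Cmod (cunit z) <= 1.
Proof.
  destruct (Req_EM_T (Cmod z) 0) as [H|H].
  - rewrite cunit_0; auto. rewrite Cmod_0; lra.
  - rewrite Cmod_cunit; auto; lra.
Qed.

Lemma polar z : z = (RtoC (Cmod z) * cunit z)%C.
Proof.
  destruct (Req_EM_T (Cmod z) 0) as [H|H].
  - rewrite cunit_0; auto. rewrite (Cmod_eq_0 _ H). apply C_ext; simpl; ring.
  - rewrite cunit_eq; auto. destruct z as [x y]. apply C_ext; simpl; field; auto.
Qed.

Lemma cunit_mult z w : cunit (z * w)%C = (cunit z * cunit w)%C.
Proof.
  destruct (Req_EM_T (Cmod z) 0) as [H|H].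
  - rewrite (Cmod_eq_0 _ H). rewrite Cmult_0_l. rewrite cunit_0 by apply Cmod_0. 
    rewrite Cmult_0_l. reflexivity.
  - destruct (Req_EM_T (Cmod w) 0) as [H'|H'].
    + rewrite (Cmod_eq_0 _ H'). rewrite Cmult_0_r. rewrite cunit_0 by apply Cmod_0. 
      rewrite Cmult_0_r. reflexivity.
    + rewrite !cunit_eq; auto. rewrite Cmod_mult.
      destruct z as [x y], w as [u v]. apply C_ext; simpl; field; auto.
      rewrite Cmod_mult. apply Rmult_integral_contrapositive; auto.
Qed.

Lemma ceps_eq b z : ceps b z = (cpowr (Cmod z) b * cunit z)%C.
Proof.
  unfold ceps. destruct Req_EM_T as [H|H]; auto.
  rewrite cunit_0; auto. rewrite Cmult_0_r; reflexivity.
Qed.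

Lemma cpowr_mult r1 r2 b : 0 < r1 -> 0 < r2 -> cpowr (r1 * r2) b = (cpowr r1 b * cpowr r2 b)%C.
Proof.
  intros. unfold cpowr. rewrite ln_mult; auto. rewrite RtoC_plus, Cmult_plus_distr_l.
  apply cexpc_plus.
Qed.

Lemma ceps_0 b : ceps b (RtoC 0) = RtoC 0.
Proof. unfold ceps. rewrite Cmod_0. destruct Req_EM_T; [reflexivity|lra]. Qed.

Lemma ceps_mult b z w : ceps b (z * w)%C = (ceps b z * ceps b w)%C.
Proof.
  destruct (Req_EM_T (Cmod z) 0) as [H|H].
  - rewrite (Cmod_eq_0 _ H). rewrite Cmult_0_l, ceps_0, Cmult_0_l. reflexivity.
  - destruct (Req_EM_T (Cmod w) 0) as [H'|H'].
    + rewrite (Cmod_eq_0 _ H'). rewrite Cmult_0_r, ceps_0, Cmult_0_r. reflexivity.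
    + rewrite !ceps_eq, Cmod_mult, cunit_mult.
      pose proof (Cmod_ge_0 z). pose proof (Cmod_ge_0 w).
      rewrite cpowr_mult by lra. 
      rewrite !Cmult_assoc. f_equal. rewrite <- !Cmult_assoc. f_equal. apply Cmult_comm.
Qed.

Lemma cpowr_1 b : cpowr 1 b = RtoC 1.
Proof. unfold cpowr. rewrite ln_1. replace (b * RtoC 0)%C with (RtoC 0) by (apply C_ext; simpl; ring).
  rewrite cexpc_R, exp_0. reflexivity. Qed.

Lemma ceps_unit b u : Cmod u = 1 -> ceps b u = u.
Proof.
  intro H. rewrite ceps_eq, H, cpowr_1, Cmult_1_l, cunit_eq by lra. rewrite H.
  rewrite Rinv_1, Cmult_1_l. reflexivity.
Qed.

Lemma ceps_pos b r : 0 < r -> ceps b (RtoC r) = cpowr r b.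
Proof.
  intro H. rewrite ceps_eq, Cmod_RtoC_pos by lra. rewrite cunit_eq; rewrite Cmod_RtoC_pos; try lra.
  replace (RtoC (/ r) * RtoC r)%C with (RtoC 1). apply Cmult_1_r.
  apply C_ext; simpl; field; lra.
Qed.

Definition beta (a : C) : C := ((RtoC 1 - Ci * RtoC (Im a)) / RtoC (Re a))%C.

Lemma ceps_inv_eq a w : ceps_inv a w = ceps (beta a) w.
Proof. reflexivity. Qed.

Lemma ceps_inv_ceps a z : Re a <> 0 -> ceps (beta a) (ceps a z) = z.
Proof.
  intro Ha.
  destruct (Req_EM_T (Cmod z) 0) as [H|H].
  - rewrite (Cmod_eq_0 _ H), !ceps_0. reflexivity.
  - rewrite (ceps_eq a z), ceps_mult.
    rewrite (ceps_unit _ (cunit z)) by (apply Cmod_cunit; auto).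
    set (m := Cmod z). set (L := ln m).
    destruct a as [p q]. unfold Re, Im in *; simpl in *.
    unfold cpowr. fold L.
    replace ((p, q) * RtoC L)%C with ((p * L, q * L) : C) by (apply C_ext; simpl; ring).
    rewrite cexpc_split, ceps_mult.
    rewrite (ceps_unit _ (cexpc (0, q * L))) by (rewrite Cmod_cexpc; simpl; apply exp_0).
    rewrite ceps_pos by apply exp_pos.
    unfold cpowr. rewrite ln_exp.
    replace (beta (p, q) * RtoC (p * L))%C with ((L, (- (q * L))%R) : C).
    2:{ unfold beta, Cdiv, Cinv, Re, Im; simpl. apply C_ext; simpl; field; auto. }
    rewrite <- cexpc_plus.
    replace (Cplus (L, (- (q * L))%R) (0, (q * L)%R)) with (RtoC L) by (apply C_ext; simpl; ring).
    rewrite cexpc_R. unfold L. rewrite exp_ln.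
    + symmetry; apply polar.
    + pose proof (Cmod_ge_0 z). unfold m; lra.
Qed.

Lemma csum_plus f g n : csum (fun k => f k + g k)%C n = (csum f n + csum g n)%C.
Proof. induction n; simpl. apply C_ext; simpl; ring. rewrite IHn. ring. Qed.

Lemma csum_scal c f n : csum (fun k => c * f k)%C n = (c * csum f n)%C.
Proof. induction n; simpl. apply C_ext; simpl; ring. rewrite IHn. ring. Qed.

Lemma csum_ext_lt f g n : (forall k, (k < n)%nat -> f k = g k) -> csum f n = csum g n.
Proof. induction n; simpl; intros H; auto. rewrite IHn by (intros; apply H; lia). rewrite H by lia. reflexivity. Qed.

Lemma csum_zero f n : (forall k, (k < n)%nat -> f k = RtoC 0) -> csum f n = RtoC 0.
Proof. intro H. rewrite (csum_ext_lt f (fun _ => RtoC 0)) by auto. induction n; simpl; auto.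
  rewrite IHn by (intros; apply H; lia). apply C_ext; simpl; ring. Qed.

Lemma csum_swap (F : nat -> nat -> C) n m :
  csum (fun k => csum (fun j => F k j) m) n = csum (fun j => csum (fun k => F k j) n) m.
Proof.
  induction n; simpl.
  - symmetry. apply csum_zero. intros; reflexivity.
  - rewrite IHn. rewrite <- csum_plus. reflexivity.
Qed.

Lemma RtoC_rsum f n : RtoC (rsum f n) = csum (fun k => RtoC (f k)) n.
Proof. induction n; simpl; auto. rewrite RtoC_plus, IHn. reflexivity. Qed.

Lemma rsum_nonneg f n : (forall k, 0 <= f k) -> 0 <= rsum f n.
Proof. intro H; induction n; simpl; [lra|]. specialize (H n); lra. Qed.

Lemma rsum_ge f n j : (forall k, 0 <= f k) -> (j < n)%nat -> f j <= rsum f n.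
Proof.
  intros H; induction n; intros Hj; [lia|]. simpl.
  destruct (Nat.eq_dec j n).
  - subst. pose proof (rsum_nonneg f n H). lra.
  - pose proof (IHn ltac:(lia)). specialize (H n). lra.
Qed.

Section Group.
Variable a : nat -> C.
Variable n : nat.
Let x k := Cmod (a k).
Let u k := cunit (a k).
Definition Nx (v : R) := rsum (fun k => if Req_EM_T v (Cmod (a k)) then 1 else 0) n.

Lemma Nx_ge j : (j < n)%nat -> 1 <= Nx (Cmod (a j)).
Proof.
  intro Hj. unfold Nx.
  pose proof (rsum_ge (fun k => if Req_EM_T (Cmod (a j)) (Cmod (a k)) then 1 else 0) n j) as H.
  simpl in H. destruct Req_EM_T as [_|E]; [|exfalso; apply E; reflexivity].
  apply H; auto. intro k; destruct Req_EM_T; lra.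
Qed.

Lemma group_sum (h : R -> C) :
  csum (fun k => h (Cmod (a k)) * cS a n k)%C n =
  csum (fun j => h (Cmod (a j)) * RtoC (Nx (Cmod (a j))) * cunit (a j))%C n.
Proof.
  unfold cS.
  transitivity (csum (fun k => csum (fun t => if Req_EM_T (Cmod (a t)) (Cmod (a k))
                   then h (Cmod (a t)) * cunit (a t) else RtoC 0)%C n) n).
  { apply csum_ext_lt. intros k _. rewrite <- csum_scal. apply csum_ext_lt. intros t _.
    destruct Req_EM_T as [E|E]. rewrite E; reflexivity. apply C_ext; simpl; ring. }
  rewrite csum_swap. apply csum_ext_lt. intros j _.
  unfold Nx. rewrite RtoC_rsum.
  match goal with |- _ = (?A * ?B * ?D)%C => replace (A * B * D)%C with ((A * D) * B)%C by ring end.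
  rewrite <- csum_scal.
  apply csum_ext_lt. intros k _.
  destruct (Req_EM_T (Cmod (a j)) (Cmod (a k))) as [E|E].
  - apply C_ext; simpl; ring.
  - apply C_ext; simpl; ring.
Qed.

Lemma cS_zero k : Cmod (a k) = 0 -> cS a n k = RtoC 0.
Proof.
  intro H. unfold cS. apply csum_zero. intros t _. destruct Req_EM_T as [E|E]; auto.
  apply cunit_0. congruence.
Qed.

Lemma cancel (Q : R -> Prop) (g : R -> C) :
  (forall k, (k < n)%nat -> Q (Cmod (a k)) -> cS a n k = RtoC 0) ->
  csum (fun k => ifP (Q (Cmod (a k))) (g (Cmod (a k)) * cunit (a k))%C (RtoC 0)) n = RtoC 0.
Proof.
  intro HQ.
  pose (h := fun v => ifP (Q v) (g v / RtoC (Nx v))%C (RtoC 0)).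
  transitivity (csum (fun k => h (Cmod (a k)) * cS a n k)%C n).
  - rewrite group_sum. apply csum_ext_lt. intros j Hj. unfold h, ifP.
    destruct excluded_middle_informative.
    + pose proof (Nx_ge j Hj). field. intro E. apply RtoC_inj in E. lra.
    + apply C_ext; simpl; ring.
  - apply csum_zero. intros k Hk. unfold h, ifP. destruct excluded_middle_informative.
    + rewrite HQ; auto. apply C_ext; simpl; ring.
    + apply C_ext; simpl; ring.
Qed.
End Group.

Section Lims.
Context {T : Type} {F : (T -> Prop) -> Prop} {FF : Filter F}.

Lemma lim_C_comp (f : T -> C) x y :
  filterlim (fun t => fst (f t)) F (locally x) ->
  filterlim (fun t => snd (f t)) F (locally y) ->
  filterlim f F (locally ((x, y) : C)).
Proof.
  intros H1 H2 P [eps He]. unfold filtermap.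
  apply filter_imp with (fun t => @ball R_UniformSpace x eps (fst (f t)) /\ @ball R_UniformSpace y eps (snd (f t))).
  - intros t [h1 h2]. apply He. destruct (f t). split; auto.
  - apply filter_and.
    + apply (H1 (@ball R_UniformSpace x eps)). apply locally_ball.
    + apply (H2 (@ball R_UniformSpace y eps)). apply locally_ball.
Qed.

Lemma lim_fst (f : T -> C) z : filterlim f F (locally z) -> filterlim (fun t => fst (f t)) F (locally (fst z)).
Proof.
  intros H P [eps He]. apply (H (fun w => P (fst w))). exists eps.
  intros w Hw. apply He. destruct z, w. destruct Hw; auto.
Qed.

Lemma lim_snd (f : T -> C) z : filterlim f F (locally z) -> filterlim (fun t => snd (f t)) F (locally (snd z)).
Proof.
  intros H P [eps He]. apply (H (fun w => P (snd w))). exists eps.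
  intros w Hw. apply He. destruct z, w. destruct Hw; auto.
Qed.

Lemma lim_C0 (f : T -> C) :
  (forall eps, 0 < eps -> F (fun t => Cmod (f t) < eps)) -> filterlim f F (locally (RtoC 0)).
Proof.
  intros H. apply lim_C_comp.
  - intros P [eps He]. specialize (H eps (cond_pos eps)). unfold filtermap. revert H. apply filter_imp.
    intros t Ht. apply He. simpl. change (Rabs (fst (f t) - 0) < eps).
    pose proof (Rmax_Cmod (f t)). pose proof (Rmax_l (Rabs (fst (f t))) (Rabs (snd (f t)))).
    rewrite Rminus_0_r. lra.
  - intros P [eps He]. specialize (H eps (cond_pos eps)). unfold filtermap. revert H. apply filter_imp.
    intros t Ht. apply He. simpl. change (Rabs (snd (f t) - 0) < eps).
    pose proof (Rmax_Cmod (f t)). pose proof (Rmax_r (Rabs (fst (f t))) (Rabs (snd (f t)))).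
    rewrite Rminus_0_r. lra.
Qed.

Lemma lim_C_abs (f : T -> C) x :
  filterlim f F (@locally C_UniformSpace x) <-> filterlim f F (@locally (AbsRing_UniformSpace C_AbsRing) x).
Proof.
  split; intros H P HP; apply H; apply locally_C; auto.
Qed.

Lemma lim_Cmult (f g : T -> C) x y :
  filterlim f F (locally x) -> filterlim g F (locally y) ->
  filterlim (fun t => f t * g t)%C F (locally (x * y)%C).
Proof.
  intros H1 H2. apply lim_C_abs. apply lim_C_abs in H1. apply lim_C_abs in H2.
  eapply filterlim_comp_2; [exact H1 | exact H2 |].
  exact (@filterlim_mult C_AbsRing x y).
Qed.

Lemma lim_Cplus (f g : T -> C) x y :
  filterlim f F (locally x) -> filterlim g F (locally y) ->
  filterlim (fun t => f t + g t)%C F (locally (x + y)%C).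
Proof.
  intros H1 H2. eapply filterlim_comp_2; eauto.
  intros P HP. exact (@filterlim_plus C_AbsRing C_NormedModule x y P HP).
Qed.

Lemma lim_Rmult (f g : T -> R) x y :
  filterlim f F (locally x) -> filterlim g F (locally y) ->
  filterlim (fun t => f t * g t) F (locally (x * y)).
Proof.
  intros H1 H2. eapply filterlim_comp_2; eauto.
  intros P HP. exact (@filterlim_mult R_AbsRing x y P HP).
Qed.

Lemma lim_cont (h : R -> R) (f : T -> R) x :
  continuous h x -> filterlim f F (locally x) -> filterlim (fun t => h (f t)) F (locally (h x)).
Proof. intros Hc Hf. eapply filterlim_comp; eauto. Qed.

Lemma lim_RtoC (f : T -> R) x :
  filterlim f F (locally x) -> filterlim (fun t => RtoC (f t)) F (locally (RtoC x)).
Proof. intro H. apply lim_C_comp; simpl; auto. apply filterlim_const. Qed.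

Lemma lim_Cmod (f : T -> C) z :
  filterlim f F (locally z) -> filterlim (fun t => Cmod (f t)) F (locally (Cmod z)).
Proof. intro H. eapply filterlim_comp; eauto. intros P HP. exact (@filterlim_norm C_AbsRing C_NormedModule z P HP). Qed.

Lemma lim_cexpc (f : T -> C) z :
  filterlim f F (locally z) -> filterlim (fun t => cexpc (f t)) F (locally (cexpc z)).
Proof.
  intro H. destruct z as [p q]. unfold cexpc at 2. unfold Re, Im. simpl.
  pose proof (lim_fst f _ H) as H1. pose proof (lim_snd f _ H) as H2. simpl in H1, H2.
  apply lim_C_comp; unfold cexpc, Re, Im; simpl.
  - apply lim_Rmult. apply lim_cont; auto. apply continuous_exp.
    apply lim_cont; auto. apply continuous_cos.
  - apply lim_Rmult. apply lim_cont; auto. apply continuous_exp.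
    apply lim_cont; auto. apply continuous_sin.
Qed.

Lemma lim_csum0 (f : T -> nat -> C) n :
  (forall k, filterlim (fun t => f t k) F (locally (RtoC 0))) ->
  filterlim (fun t => csum (f t) n) F (locally (RtoC 0)).
Proof.
  intro H. induction n; simpl.
  - apply filterlim_const.
  - replace (RtoC 0) with (RtoC 0 + RtoC 0)%C by (apply C_ext; simpl; ring).
    apply lim_Cplus; auto.
Qed.
End Lims.

Lemma ceps_formula b w :
  ceps b w = (cexpc (b * RtoC (ln (Cmod w))) * (RtoC (/ Cmod w) * w))%C.
Proof.
  rewrite ceps_eq. unfold cpowr. f_equal.
  destruct (Req_EM_T (Cmod w) 0) as [H|H].
  - rewrite cunit_0; auto. rewrite (Cmod_eq_0 _ H). apply C_ext; simpl; ring.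
  - apply cunit_eq; auto.
Qed.

Lemma lim_ceps {T} {F : (T -> Prop) -> Prop} {FF : Filter F} (B W : T -> C) b0 w0 :
  w0 <> RtoC 0 ->
  filterlim B F (locally b0) -> filterlim W F (locally w0) ->
  filterlim (fun t => ceps (B t) (W t)) F (locally (ceps b0 w0)).
Proof.
  intros Hw HB HW.
  assert (Hm : 0 < Cmod w0) by (apply Cmod_gt_0; auto).
  eapply filterlim_ext. intro t. symmetry. apply ceps_formula.
  rewrite ceps_formula.
  apply lim_Cmult.
  - apply lim_cexpc. apply lim_Cmult; auto. apply lim_RtoC. apply lim_cont.
    apply continuous_ln; auto. apply lim_Cmod; auto.
  - apply lim_Cmult; auto. apply lim_RtoC. apply lim_cont.
    apply continuous_Rinv; lra. apply lim_Cmod; auto.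
Qed.

Lemma ln_0' : ln 0 = 0.
Proof. unfold ln. destruct (Rlt_dec 0 0) as [h|h]. exfalso; exact (Rlt_irrefl 0 h). reflexivity. Qed.

Definition alpha (Th rho : R) : C := (RtoC rho * cis Th)%C.

Lemma alpha_eq Th rho : alpha Th rho = ((rho * cos Th)%R, (rho * sin Th)%R).
Proof. unfold alpha, cis. apply C_ext; simpl; ring. Qed.

Lemma lim_inv_inf c : c <> 0 ->
  filterlim (fun rho => / (rho * c)) (Rbar_locally p_infty) (locally 0).
Proof.
  intros Hc P [eps He]. unfold filtermap.
  assert (Hac : 0 < Rabs c) by (apply Rabs_pos_lt; auto).
  pose proof (cond_pos eps) as Heps.
  exists (/ (eps * Rabs c)). intros rho Hrho.
  assert (HM : 0 < / (eps * Rabs c)) by (apply Rinv_0_lt_compat; nra).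
  apply He. change (Rabs (/ (rho * c) - 0) < eps).
  rewrite Rminus_0_r, Rabs_inv, Rabs_mult, (Rabs_pos_eq rho) by lra.
  replace (pos eps) with (/ (/ (eps * Rabs c) * Rabs c)) by (field; split; lra).
  apply Rinv_lt_contravar. apply Rmult_lt_0_compat; nra.
  apply Rmult_lt_compat_r; lra.
Qed.

Definition beta0 (Th : R) : C := (- (Ci * RtoC (tan Th)))%C.

Lemma beta_lim Th : cos Th <> 0 ->
  filterlim (fun rho => beta (alpha Th rho)) (Rbar_locally p_infty) (locally (beta0 Th)).
Proof.
  intro Hc.
  replace (beta0 Th) with ((0, (- tan Th)%R) : C) by (unfold beta0; apply C_ext; simpl; ring).
  apply filterlim_ext_loc with (f := fun rho => ((/ (rho * cos Th))%R, (- tan Th)%R) : C).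
  - exists 0. intros rho Hrho. rewrite alpha_eq. unfold beta, Cdiv, Cinv, Re, Im, tan; simpl.
    apply C_ext; simpl; field; split; auto; lra.
  - apply lim_C_comp; simpl.
    + apply lim_inv_inf; auto.
    + apply filterlim_const.
Qed.

Lemma lim_decay Th y u : 0 < y -> cos Th * ln y < 0 -> Cmod u <= 1 ->
  filterlim (fun rho => cpowr y (alpha Th rho) * u)%C (Rbar_locally p_infty) (locally (RtoC 0)).
Proof.
  intros Hy HK Hu. apply lim_C0. intros eps Heps.
  set (K := cos Th * ln y) in *.
  exists (ln eps / K). intros rho Hrho.
  rewrite Cmod_mult. unfold cpowr. rewrite Cmod_cexpc. rewrite alpha_eq. unfold Re; simpl.
  replace (rho * cos Th * ln y - rho * sin Th * 0) with (rho * K) by (unfold K; ring).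
  assert (H1 : rho * K < ln eps).
  { replace (ln eps) with (ln eps / K * K) by (field; lra). nra. }
  assert (H2 : exp (rho * K) < eps).
  { rewrite <- (exp_ln eps) by auto. apply exp_increasing; auto. }
  pose proof (Cmod_ge_0 u). pose proof (exp_pos (rho * K)). nra.
Qed.

Section Main.
Variable Th : R.
Variable a : nat -> C.
Variable n : nat.
Variable Rv : R.
Hypothesis Hc : cos Th <> 0.
Hypothesis HR : 0 < Rv.
Let T := csum (fun t => if Req_EM_T (Cmod (a t)) Rv then cunit (a t) else RtoC 0) n.
Hypothesis HT : T <> RtoC 0.
Hypothesis Hcanc : forall k, (k < n)%nat -> Cmod (a k) <> Rv ->
  0 <= cos Th * ln (Cmod (a k) / Rv) -> cS a n k = RtoC 0.

Let Dec v := v <> Rv /\ cos Th * ln (v / Rv) < 0.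
Let Canc v := v <> Rv /\ 0 <= cos Th * ln (v / Rv).
Let delta al := csum (fun k => ifP (Dec (Cmod (a k))) (cpowr (Cmod (a k) / Rv) al * cunit (a k))%C (RtoC 0)) n.

Lemma stepA al : csum (fun k => ceps al (a k)) n = (cpowr Rv al * (T + delta al))%C.
Proof.
  transitivity (csum (fun k =>
     (cpowr Rv al * (if Req_EM_T (Cmod (a k)) Rv then cunit (a k) else RtoC 0)
      + ifP (Canc (Cmod (a k))) (cpowr (Cmod (a k)) al * cunit (a k)) (RtoC 0))
      + cpowr Rv al * ifP (Dec (Cmod (a k))) (cpowr (Cmod (a k) / Rv) al * cunit (a k))%C (RtoC 0))%C n).
  - apply csum_ext_lt. intros k _. rewrite ceps_eq.
    pose proof (Cmod_ge_0 (a k)) as Hge.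
    unfold ifP, Canc, Dec.
    destruct Req_EM_T as [E|E].
    + rewrite E. do 2 (destruct excluded_middle_informative as [[? ?]|]; [tauto|]). ring.
    + destruct (Rle_dec 0 (cos Th * ln (Cmod (a k) / Rv))) as [L|L].
      * destruct excluded_middle_informative as [_|N]; [|exfalso; tauto].
        destruct excluded_middle_informative as [[_ ?]|_]; [lra|]. ring.
      * destruct excluded_middle_informative as [[_ ?]|_]; [lra|].
        destruct excluded_middle_informative as [_|N]; [|exfalso; apply N; split; auto; lra].
        assert (Hpos : 0 < Cmod (a k)).
        { destruct Hge as [?|E0]; auto. exfalso. rewrite <- E0 in L.
          unfold Rdiv in L. rewrite Rmult_0_l, ln_0' in L. lra. }
        replace (Cmod (a k)) with (Rv * (Cmod (a k) / Rv)) at 1 by (field; lra).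
        rewrite cpowr_mult; [ring | lra |].
        apply Rdiv_lt_0_compat; lra.
  - rewrite !csum_plus, !csum_scal.
    rewrite (cancel a n Canc (fun v => cpowr v al)).
    + unfold delta, T. ring.
    + intros k Hk [H1 H2]. apply Hcanc; auto.
Qed.

Lemma stepB rho : 0 < rho ->
  ceps_inv (alpha Th rho) (csum (fun k => ceps (alpha Th rho) (a k)) n) =
  (RtoC Rv * ceps (beta (alpha Th rho)) (T + delta (alpha Th rho)))%C.
Proof.
  intro Hr. rewrite stepA, ceps_inv_eq, ceps_mult. f_equal.
  rewrite <- (ceps_pos (alpha Th rho) Rv HR). apply ceps_inv_ceps.
  rewrite alpha_eq. unfold Re; simpl. apply Rmult_integral_contrapositive; split; auto; lra.
Qed.

Lemma main_lim :
  clim Th (fun al => ceps_inv al (csum (fun k => ceps al (a k)) n)) (RtoC Rv * ceps (beta0 Th) T)%C.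
Proof.
  unfold clim.
  apply filterlim_ext_loc with (f := fun rho => (RtoC Rv * ceps (beta (alpha Th rho)) (T + delta (alpha Th rho)))%C).
  - exists 0. intros rho Hr. symmetry. apply stepB; auto.
  - apply lim_Cmult. apply filterlim_const.
    apply lim_ceps; auto. apply beta_lim; auto.
    cut (filterlim (fun rho => T + delta (alpha Th rho))%C (Rbar_locally p_infty) (locally (T + RtoC 0)%C)).
    { intro H; rewrite Cplus_0_r in H; exact H. }
    apply lim_Cplus. apply filterlim_const.
    apply lim_csum0. intro k. unfold ifP, Dec.
    destruct excluded_middle_informative as [[H1 H2]|H].
    + apply lim_decay.
      * assert (0 <= Cmod (a k)) by apply Cmod_ge_0.
        destruct H as [?|E0]. apply Rdiv_lt_0_compat; lra.
        exfalso. rewrite <- E0 in H2. unfold Rdiv in H2. rewrite Rmult_0_l, ln_0' in H2. lra.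
      * auto.
      * apply Cmod_cunit_le.
    + apply filterlim_const.
Qed.
End Main.

Lemma extr_exists_le P v n : (exists k, (k < n)%nat /\ P k) -> exists M, extr_idx Rle P v n M.
Proof.
  induction n as [|n IH]; intros [k [Hk HP]]; [lia|].
  destruct (classic (exists k, (k < n)%nat /\ P k)) as [Hex|Hno].
  - destruct (IH Hex) as [M [HM [[k1 [Hk1 [HP1 E1]]] Hall]]].
    destruct (classic (P n /\ v M < v n)) as [[Pn Lt]|Nn].
    + exists n. split; [lia|]. split. exists n; split; [lia|]; auto.
      intros j Hj Pj. destruct (Nat.eq_dec j n); [subst; lra|].
      specialize (Hall j ltac:(lia) Pj). lra.
    + exists M. split; [lia|]. split. exists k1; split; [lia|]; auto.
      intros j Hj Pj. destruct (Nat.eq_dec j n); [subst|apply Hall; auto; lia].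
      destruct (Rle_dec (v n) (v M)); auto. exfalso; apply Nn; split; auto; lra.
  - assert (k = n). { destruct (Nat.eq_dec k n); auto. exfalso; apply Hno; exists k; split; auto; lia. }
    subst. exists n. split; [lia|]. split. exists n; split; [lia|]; auto.
    intros j Hj Pj. destruct (Nat.eq_dec j n); [subst; lra|].
    exfalso; apply Hno; exists j; split; auto; lia.
Qed.

Lemma extr_exists_ge P v n : (exists k, (k < n)%nat /\ P k) -> exists M, extr_idx Rge P v n M.
Proof.
  intro H. destruct (extr_exists_le P (fun k => - v k) n H) as [M [HM [[k1 [Hk1 [HP1 E1]]] Hall]]].
  exists M. split; auto. split. exists k1; split; auto; split; auto; lra.
  intros j Hj Pj. specialize (Hall j Hj Pj). lra.
Qed.

Definition Sfun (a : nat -> C) n := fun al => ceps_inv al (csum (fun k => ceps al (a k)) n).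

Lemma sum_case Th (le : R -> R -> Prop) n a M : cos Th <> 0 ->
  (forall x R, 0 < x -> 0 < R -> x <> R -> le x R -> cos Th * ln (x / R) < 0) ->
  extr_idx le (cadm a n) (fun k => Cmod (a k)) n M ->
  clim Th (Sfun a n) (cvalue Th a n M).
Proof.
  intros Hc Hsign [HM [[k0 [Hk0 [[Ha0 Hr0] E0]]] Hall]].
  set (Rv := Cmod (a M)).
  assert (HR : 0 < Rv). { unfold Rv. rewrite <- E0. apply Cmod_gt_0; auto. }
  assert (HT : cS a n M <> RtoC 0).
  { intro E. apply Hr0. unfold cr. replace (cS a n k0) with (cS a n M). rewrite E; apply Cmod_0.
    unfold cS. rewrite E0. reflexivity. }
  pose proof (main_lim Th a n Rv Hc HR HT) as H.
  assert (Hcanc : forall k, (k < n)%nat -> Cmod (a k) <> Rv ->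
    0 <= cos Th * ln (Cmod (a k) / Rv) -> cS a n k = RtoC 0).
  { intros k Hk Hne Hle. destruct (classic (cS a n k = RtoC 0)) as [?|Hn]; auto. exfalso.
    destruct (Req_EM_T (Cmod (a k)) 0) as [Z|Z].
    - apply Hn. apply cS_zero; auto.
    - assert (Hak : a k <> RtoC 0). { intro E; apply Z; rewrite E; apply Cmod_0. }
      assert (Hadm : cadm a n k).
      { split; auto. unfold cr. intro E. apply Hn. apply Cmod_eq_0; auto. }
      specialize (Hall k Hk Hadm).
      assert (0 < Cmod (a k)) by (apply Cmod_gt_0; auto).
      specialize (Hsign (Cmod (a k)) Rv H0 HR Hne Hall). lra. }
  specialize (H Hcanc).
  unfold Sfun.
  replace (cvalue Th a n M) with (RtoC Rv * ceps (beta0 Th) (cS a n M))%C; [exact H|].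
  unfold cvalue, cr, cs, beta0. rewrite ceps_eq. fold Rv. ring.
Qed.

Lemma zero_case Th (le : R -> R -> Prop) n a :
  ((exists k, (k < n)%nat /\ cadm a n k) -> exists M, extr_idx le (cadm a n) (fun k => Cmod (a k)) n M) ->
  (~ exists M, extr_idx le (cadm a n) (fun k => Cmod (a k)) n M) ->
  clim Th (Sfun a n) (RtoC 0).
Proof.
  intros Hex Hno.
  assert (Hz : forall k, (k < n)%nat -> True -> cS a n k = RtoC 0).
  { intros k Hk _. destruct (classic (cS a n k = RtoC 0)) as [?|Hn]; auto. exfalso.
    destruct (Req_EM_T (Cmod (a k)) 0) as [Z|Z].
    - apply Hn. apply cS_zero; auto.
    - apply Hno, Hex. exists k. split; auto. split.
      + intro E; apply Z; rewrite E; apply Cmod_0.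
      + unfold cr. intro E. apply Hn. apply Cmod_eq_0; auto. }
  unfold clim, Sfun.
  apply filterlim_ext with (f := fun _ => RtoC 0); [|apply filterlim_const].
  intro rho. symmetry.
  set (al := (RtoC rho * cis Th)%C).
  assert (E : csum (fun k => ceps al (a k)) n = RtoC 0).
  { rewrite <- (cancel a n (fun _ => True) (fun v => cpowr v al)) by auto.
    apply csum_ext_lt. intros k _. unfold ifP.
    destruct (ClassicalDescription.excluded_middle_informative True) as [_|N]; [|exfalso; apply N; exact I]. apply ceps_eq. }
  rewrite E, ceps_inv_eq, ceps_0. reflexivity.
Qed.

Lemma sum_thm Th (le : R -> R -> Prop) : cos Th <> 0 ->
  (forall x R, 0 < x -> 0 < R -> x <> R -> le x R -> cos Th * ln (x / R) < 0) ->
  (forall n a, (exists k, (k < n)%nat /\ cadm a n k) -> exists M, extr_idx le (cadm a n) (fun k => Cmod (a k)) n M) ->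
  forall n a,
   (forall M, extr_idx le (cadm a n) (fun k => Cmod (a k)) n M -> clim Th (Sfun a n) (cvalue Th a n M)) /\
   ((~ exists M, extr_idx le (cadm a n) (fun k => Cmod (a k)) n M) -> clim Th (Sfun a n) (RtoC 0)).
Proof.
  intros Hc Hs He n a. split.
  - intros M HM. eapply sum_case; eauto.
  - apply zero_case; auto.
Qed.

Lemma clim_unique Th f L1 L2 : clim Th f L1 -> clim Th f L2 -> L1 = L2.
Proof.
  unfold clim. intros H1 H2.
  apply (@filterlim_locally_unique _ C_AbsRing C_NormedModule (Rbar_locally p_infty)
           (Proper_StrongProper _ (Rbar_locally_filter p_infty)) _ L1 L2 H1 H2).
Qed.

Lemma Re_alpha_ne Th rho : cos Th <> 0 -> 0 < rho -> Re (RtoC rho * cis Th)%C <> 0.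
Proof.
  intros Hc Hr. fold (alpha Th rho). rewrite alpha_eq. unfold Re; simpl.
  apply Rmult_integral_contrapositive; split; auto; lra.
Qed.

Definition seq2 (a b : C) : nat -> C := fun k => match k with O => a | _ => b end.

Lemma add_exists Th (le : R -> R -> Prop) : cos Th <> 0 ->
  (forall x R, 0 < x -> 0 < R -> x <> R -> le x R -> cos Th * ln (x / R) < 0) ->
  (forall n a, (exists k, (k < n)%nat /\ cadm a n k) -> exists M, extr_idx le (cadm a n) (fun k => Cmod (a k)) n M) ->
  forall a b, exists L, clim Th (fun al => ceps_inv al (ceps al a + ceps al b)%C) L.
Proof.
  intros Hc Hs He a b.
  destruct (sum_thm Th le Hc Hs He 2 (seq2 a b)) as [H1 H2].
  assert (Eq : forall al, Sfun (seq2 a b) 2 al = ceps_inv al (ceps al a + ceps al b)%C).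
  { intro al. unfold Sfun; simpl. rewrite Cplus_0_l. reflexivity. }
  destruct (classic (exists M, extr_idx le (cadm (seq2 a b) 2) (fun k => Cmod (seq2 a b k)) 2 M)) as [[M HM]|HN].
  - exists (cvalue Th (seq2 a b) 2 M). eapply filterlim_ext; [|apply (H1 M HM)]. intro; simpl; apply Eq.
  - exists (RtoC 0). eapply filterlim_ext; [|apply (H2 HN)]. intro; simpl; apply Eq.
Qed.

Lemma field_from_lim Th (add : C -> C -> C) : cos Th <> 0 ->
  (forall a b, clim Th (fun al => ceps_inv al (ceps al a + ceps al b)%C) (add a b)) ->
  nonassoc_field add Cmult.
Proof.
  intros Hc Hadd.
  assert (Hev : forall (f g : C -> C) L, (forall rho, 0 < rho -> f (RtoC rho * cis Th)%C = g (RtoC rho * cis Th)%C) ->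
            clim Th f L -> clim Th g L).
  { intros f g L Hfg H. unfold clim in *. eapply filterlim_ext_loc; [|exact H].
    exists 0. intros; apply Hfg; auto. }
  exists (RtoC 0), (RtoC 1). repeat split.
  - intro E. apply RtoC_inj in E. lra.
  - intros a b. apply (clim_unique Th (fun al => ceps_inv al (ceps al a + ceps al b)%C)); auto.
    eapply filterlim_ext; [|apply (Hadd b a)]. intro; simpl. rewrite Cplus_comm; reflexivity.
  - intros a. apply (clim_unique Th (fun al => ceps_inv al (ceps al (RtoC 0) + ceps al a)%C)); auto.
    apply (Hev (fun _ => a)). intros rho Hr. rewrite ceps_0, Cplus_0_l, ceps_inv_eq, ceps_inv_ceps; auto.
    apply Re_alpha_ne; auto.
    unfold clim; apply filterlim_const.
  - intros a. exists (- a)%C.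
    apply (clim_unique Th (fun al => ceps_inv al (ceps al a + ceps al (- a))%C)); auto.
    eapply filterlim_ext; [|apply filterlim_const]. intro al. simpl.
    replace (- a)%C with (RtoC (-1) * a)%C by ring.
    rewrite ceps_mult, (ceps_unit _ (RtoC (-1))).
    + match goal with |- _ = ceps_inv ?x (?y + ?z)%C => replace (y + z)%C with (RtoC 0) by ring end.
      rewrite ceps_inv_eq, ceps_0. reflexivity.
    + rewrite Cmod_R. unfold Rabs. destruct Rcase_abs; lra.
  - intros; apply Cmult_assoc.
  - intros; apply Cmult_comm.
  - intros; apply Cmult_1_l.
  - intros a Ha. exists (/ a)%C. apply Cinv_r; auto.
  - intros a b c.
    apply (clim_unique Th (fun al => ceps_inv al (ceps al (a * b) + ceps al (a * c))%C)); auto.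
    apply (Hev (fun al => (a * ceps_inv al (ceps al b + ceps al c))%C)).
    + intros rho Hr. rewrite !ceps_mult, <- Cmult_plus_distr_l, !ceps_inv_eq, ceps_mult, ceps_inv_ceps; auto.
      apply Re_alpha_ne; auto.
    + unfold clim. apply lim_Cmult. apply filterlim_const. apply Hadd.
Qed.

Lemma complex_part Th (le : R -> R -> Prop) : cos Th <> 0 ->
  (forall x R, 0 < x -> 0 < R -> x <> R -> le x R -> cos Th * ln (x / R) < 0) ->
  (forall n a, (exists k, (k < n)%nat /\ cadm a n k) -> exists M, extr_idx le (cadm a n) (fun k => Cmod (a k)) n M) ->
  (exists add : C -> C -> C,
     (forall a b : C, clim Th (fun alpha => ceps_inv alpha (ceps alpha a + ceps alpha b)%C) (add a b))
     /\ nonassoc_field add Cmult)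
  /\
  (forall (n : nat) (a : nat -> C),
     (forall M : nat, extr_idx le (cadm a n) (fun k => Cmod (a k)) n M ->
        clim Th (fun alpha => ceps_inv alpha (csum (fun k => ceps alpha (a k)) n)) (cvalue Th a n M))
     /\
     ((~ exists M : nat, extr_idx le (cadm a n) (fun k => Cmod (a k)) n M) ->
        clim Th (fun alpha => ceps_inv alpha (csum (fun k => ceps alpha (a k)) n)) (RtoC 0))).
Proof.
  intros Hc Hs He. split.
  - pose proof (add_exists Th le Hc Hs He) as Hex.
    exists (fun a b => proj1_sig (constructive_indefinite_description _ (Hex a b))).
    assert (Hl : forall a b, clim Th (fun al => ceps_inv al (ceps al a + ceps al b)%C)
                  (proj1_sig (constructive_indefinite_description _ (Hex a b)))).
    { intros a b. exact (proj2_sig (constructive_indefinite_description _ (Hex a b))). }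
    split; auto. apply (field_from_lim Th); auto.
  - apply (sum_thm Th le Hc Hs He).
Qed.

Lemma sign1 Th : 0 < cos Th ->
  forall x R, 0 < x -> 0 < R -> x <> R -> Rle x R -> cos Th * ln (x / R) < 0.
Proof.
  intros Hc x R Hx HR Hne Hle.
  assert (x / R < 1).
  { apply Rmult_lt_reg_r with R; auto. unfold Rdiv. rewrite Rmult_assoc, Rinv_l; lra. }
  assert (ln (x / R) < 0).
  { rewrite <- ln_1. apply ln_increasing; auto. apply Rdiv_lt_0_compat; auto. }
  nra.
Qed.

Lemma sign2 Th : cos Th < 0 ->
  forall x R, 0 < x -> 0 < R -> x <> R -> Rge x R -> cos Th * ln (x / R) < 0.
Proof.
  intros Hc x R Hx HR Hne Hle.
  assert (1 < x / R).
  { apply Rmult_lt_reg_r with R; auto. unfold Rdiv. rewrite Rmult_assoc, Rinv_l; lra. }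
  assert (0 < ln (x / R)).
  { rewrite <- ln_1. apply ln_increasing; lra. }
  nra.
Qed.

Lemma cunit_R x : cunit (RtoC x) = RtoC (rsgn x).
Proof.
  unfold rsgn. destruct (Req_EM_T x 0) as [E|E].
  - subst. apply cunit_0. apply Cmod_0.
  - rewrite cunit_eq; rewrite Cmod_R.
    + apply C_ext; simpl; unfold Rdiv; ring.
    + intro H; apply E. apply Rabs_eq_0 in H; auto. 
Qed.

Lemma E1 al x : RtoC (reps al x) = ceps (RtoC al) (RtoC x).
Proof.
  rewrite ceps_eq, Cmod_R, cunit_R. unfold reps.
  destruct (Req_EM_T x 0) as [E|E].
  - subst. unfold rsgn. destruct (Req_EM_T 0 0); [|lra]. apply C_ext; simpl; ring.
  - unfold cpowr, Rpower. rewrite <- RtoC_mult, cexpc_R. rewrite <- RtoC_mult. f_equal. ring.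
Qed.

Lemma beta_R al : al <> 0 -> beta (RtoC al) = RtoC (/ al).
Proof. intro H. unfold beta, Cdiv, Cinv, Re, Im; simpl. apply C_ext; simpl; field; auto. Qed.

Lemma E2 al y : al <> 0 -> RtoC (reps_inv al y) = ceps_inv (RtoC al) (RtoC y).
Proof. intro H. rewrite ceps_inv_eq, beta_R by auto. unfold reps_inv. apply E1. Qed.

Lemma E3 al (a : nat -> R) n :
  csum (fun k => ceps (RtoC al) (RtoC (a k))) n = RtoC (rsum (fun k => reps al (a k)) n).
Proof. induction n; simpl; auto. rewrite IHn, RtoC_plus, E1. reflexivity. Qed.

Lemma cS_R (a : nat -> R) n k : cS (fun t => RtoC (a t)) n k = RtoC (rS a n k).
Proof.
  unfold cS, rS. induction n as [|m IH]; simpl; auto.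
  rewrite IH, RtoC_plus. f_equal. rewrite !Cmod_R.
  destruct (Req_EM_T (Rabs (a m)) (Rabs (a k))); [apply cunit_R|reflexivity].
Qed.

Lemma extr_R le (a : nat -> R) n M :
  extr_idx le (radm a n) (fun k => Rabs (a k)) n M <->
  extr_idx le (cadm (fun t => RtoC (a t)) n) (fun k => Cmod (RtoC (a k))) n M.
Proof.
  assert (Hadm : forall k, radm a n k <-> cadm (fun t => RtoC (a t)) n k).
  { intro k. unfold radm, cadm, cr, rr. rewrite cS_R, Cmod_R. split; intros [H1 H2]; split; auto.
    - intro E; apply H1; apply RtoC_inj; auto.
    - intro E; apply H1; rewrite E; reflexivity. }
  unfold extr_idx. setoid_rewrite Cmod_R. setoid_rewrite Hadm. tauto.
Qed.

Lemma cvalue_R Th (a : nat -> R) n M : tan Th = 0 ->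
  cvalue Th (fun t => RtoC (a t)) n M = RtoC (Rabs (a M) * rs a n M).
Proof.
  intro Ht. unfold cvalue, cr, cs, rs. rewrite cS_R, Cmod_R, cunit_R, Ht.
  unfold cpowr.
  match goal with |- context [cexpc ?z] => replace z with (RtoC 0) by (apply C_ext; simpl; ring) end.
  rewrite cexpc_R, exp_0. rewrite <- RtoC_mult. apply C_ext; simpl; ring.
Qed.

Lemma ray_lim (s Th : R) (f : R -> R) (g : C -> C) L :
  (forall rho, (RtoC rho * cis Th)%C = RtoC (s * rho)) -> s <> 0 ->
  (forall al, al <> 0 -> RtoC (f al) = g (RtoC al)) ->
  clim Th g L ->
  filterlim (fun rho => f (s * rho)) (Rbar_locally p_infty) (locally (Re L)) /\ Im L = 0.
Proof.
  intros Hray Hs Hfg H. unfold clim in H.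
  assert (H' : filterlim (fun rho => RtoC (f (s * rho))) (Rbar_locally p_infty) (locally L)).
  { eapply filterlim_ext_loc; [|exact H]. exists 0. intros rho Hr. simpl.
    rewrite Hray. symmetry. apply Hfg. apply Rmult_integral_contrapositive; split; auto; lra. }
  split.
  - apply (lim_fst _ _ H').
  - pose proof (lim_snd _ _ H') as H2. simpl in H2.
    symmetry. apply (@filterlim_locally_unique _ R_AbsRing R_NormedModule (Rbar_locally p_infty)
           (Proper_StrongProper _ (Rbar_locally_filter p_infty)) (fun _ => 0) 0 (Im L)).
    apply filterlim_const. exact H2.
Qed.

Lemma lim_minf (f : R -> R) G : filterlim (fun rho => f (-1 * rho)) (Rbar_locally p_infty) G ->
  filterlim f (Rbar_locally m_infty) G.
Proof.
  intros H P HP. destruct (H P HP) as [M HM]. exists (- M). intros x Hx.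
  specialize (HM (- x) ltac:(lra)). simpl in HM. replace (-1 * - x) with x in HM by ring. exact HM.
Qed.

Lemma lim_pinf (f : R -> R) G : filterlim (fun rho => f (1 * rho)) (Rbar_locally p_infty) G ->
  filterlim f (Rbar_locally p_infty) G.
Proof. intro H. eapply filterlim_ext; [|exact H]. intro; simpl. rewrite Rmult_1_l; reflexivity. Qed.

Lemma complex_add Th (le : R -> R -> Prop) : cos Th <> 0 ->
  (forall x R, 0 < x -> 0 < R -> x <> R -> le x R -> cos Th * ln (x / R) < 0) ->
  (forall n a, (exists k, (k < n)%nat /\ cadm a n k) -> exists M, extr_idx le (cadm a n) (fun k => Cmod (a k)) n M) ->
  exists add : C -> C -> C,
     (forall a b : C, clim Th (fun alpha => ceps_inv alpha (ceps alpha a + ceps alpha b)%C) (add a b)).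
Proof.
  intros Hc Hs He. pose proof (add_exists Th le Hc Hs He) as Hex.
  exists (fun a b => proj1_sig (constructive_indefinite_description _ (Hex a b))).
  intros a b. exact (proj2_sig (constructive_indefinite_description _ (Hex a b))).
Qed.

Lemma add_props Th (add : C -> C -> C) : cos Th <> 0 ->
  (forall a b, clim Th (fun al => ceps_inv al (ceps al a + ceps al b)%C) (add a b)) ->
  (forall a b, add a b = add b a) /\ (forall a, add (RtoC 0) a = a) /\
  (forall a, add a (- a)%C = RtoC 0) /\ (forall a b c, (a * add b c)%C = add (a * b)%C (a * c)%C).
Proof.
  intros Hc Hadd.
  destruct (field_from_lim Th add Hc Hadd) as [z [o _]].
  assert (Hev : forall (f g : C -> C) L, (forall rho, 0 < rho -> f (RtoC rho * cis Th)%C = g (RtoC rho * cis Th)%C) ->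
            clim Th f L -> clim Th g L).
  { intros f g L Hfg H. unfold clim in *. eapply filterlim_ext_loc; [|exact H].
    exists 0. intros; apply Hfg; auto. }
  repeat split.
  - intros a b. apply (clim_unique Th (fun al => ceps_inv al (ceps al a + ceps al b)%C)); auto.
    eapply filterlim_ext; [|apply (Hadd b a)]. intro; simpl. rewrite Cplus_comm; reflexivity.
  - intros a. apply (clim_unique Th (fun al => ceps_inv al (ceps al (RtoC 0) + ceps al a)%C)); auto.
    apply (Hev (fun _ => a)). intros rho Hr. rewrite ceps_0, Cplus_0_l, ceps_inv_eq, ceps_inv_ceps; auto.
    apply Re_alpha_ne; auto.
    unfold clim; apply filterlim_const.
  - intros a.
    apply (clim_unique Th (fun al => ceps_inv al (ceps al a + ceps al (- a))%C)); auto.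
    eapply filterlim_ext; [|apply filterlim_const]. intro al. simpl.
    replace (- a)%C with (RtoC (-1) * a)%C by ring.
    rewrite ceps_mult, (ceps_unit _ (RtoC (-1))).
    + match goal with |- _ = ceps_inv ?x (?y + ?z)%C => replace (y + z)%C with (RtoC 0) by ring end.
      rewrite ceps_inv_eq, ceps_0. reflexivity.
    + rewrite Cmod_R. unfold Rabs. destruct Rcase_abs; lra.
  - intros a b c.
    apply (clim_unique Th (fun al => ceps_inv al (ceps al (a * b) + ceps al (a * c))%C)); auto.
    apply (Hev (fun al => (a * ceps_inv al (ceps al b + ceps al c))%C)).
    + intros rho Hr. rewrite !ceps_mult, <- Cmult_plus_distr_l, !ceps_inv_eq, ceps_mult, ceps_inv_ceps; auto.
      apply Re_alpha_ne; auto.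
    + unfold clim. apply lim_Cmult. apply filterlim_const. apply Hadd.
Qed.

Lemma real_part (s Th : R) (le : R -> R -> Prop) (G : (R -> Prop) -> Prop) :
  (forall rho, (RtoC rho * cis Th)%C = RtoC (s * rho)) -> s <> 0 -> tan Th = 0 -> cos Th <> 0 ->
  (forall x R, 0 < x -> 0 < R -> x <> R -> le x R -> cos Th * ln (x / R) < 0) ->
  (forall n a, (exists k, (k < n)%nat /\ cadm a n k) -> exists M, extr_idx le (cadm a n) (fun k => Cmod (a k)) n M) ->
  (forall (f : R -> R) (L : R), filterlim (fun rho => f (s * rho)) (Rbar_locally p_infty) (locally L) -> filterlim f G (locally L)) ->
  ((exists add : R -> R -> R,
      (forall a b : R,
         filterlim (fun alpha => reps_inv alpha (reps alpha a + reps alpha b)) G (locally (add a b)))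
      /\ nonassoc_field add Rmult)
   /\
   (forall (n : nat) (a : nat -> R),
      (forall M : nat, extr_idx le (radm a n) (fun k => Rabs (a k)) n M ->
         filterlim (fun alpha => reps_inv alpha (rsum (fun k => reps alpha (a k)) n))
           G (locally (Rabs (a M) * rs a n M)))
      /\
      ((~ exists M : nat, extr_idx le (radm a n) (fun k => Rabs (a k)) n M) ->
         filterlim (fun alpha => reps_inv alpha (rsum (fun k => reps alpha (a k)) n))
           G (locally 0)))).
Proof.
  intros Hray Hs Ht Hc Hsign He HG. split.
  - destruct (complex_add Th le Hc Hsign He) as [addC Hadd].
    destruct (add_props Th addC Hc Hadd) as [Pc [P0 [Pi Pd]]].
    assert (Hr : forall a b, filterlim (fun rho => reps_inv (s * rho) (reps (s * rho) a + reps (s * rho) b))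
                   (Rbar_locally p_infty) (locally (Re (addC (RtoC a) (RtoC b)))) /\
                   Im (addC (RtoC a) (RtoC b)) = 0).
    { intros a b. apply (ray_lim s Th (fun al => reps_inv al (reps al a + reps al b))
                     (fun c => ceps_inv c (ceps c (RtoC a) + ceps c (RtoC b))%C)); auto.
      intros al Hal. rewrite E2 by auto. rewrite RtoC_plus, !E1. reflexivity. }
    assert (HRe : forall a b, addC (RtoC a) (RtoC b) = RtoC (Re (addC (RtoC a) (RtoC b)))).
    { intros a b. destruct (Hr a b) as [_ HI]. apply C_ext; simpl; auto. }
    exists (fun a b => Re (addC (RtoC a) (RtoC b))). split.
    + intros a b. apply HG. apply (Hr a b).
    + exists 0, 1. repeat split.
      * lra.
      * intros a b. rewrite Pc. reflexivity.
      * intros a. rewrite P0. reflexivity.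
      * intros a. exists (- a). rewrite RtoC_opp, Pi. reflexivity.
      * intros; ring.
      * intros; ring.
      * intros; ring.
      * intros a Ha. exists (/ a). field; auto.
      * intros a b c. rewrite !RtoC_mult, <- Pd. rewrite (HRe b c). simpl. ring.
  - intros n a.
    destruct (sum_thm Th le Hc Hsign He n (fun t => RtoC (a t))) as [H1 H2].
    assert (Hfg : forall al, al <> 0 -> RtoC (reps_inv al (rsum (fun k => reps al (a k)) n)) =
                     Sfun (fun t => RtoC (a t)) n (RtoC al)).
    { intros al Hal. unfold Sfun. rewrite E3, E2 by auto. reflexivity. }
    split.
    + intros M HM. apply extr_R in HM. specialize (H1 M HM). rewrite cvalue_R in H1 by auto.
      destruct (ray_lim s Th _ _ _ Hray Hs Hfg H1) as [L _]. apply HG. exact L.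
    + intros HN. assert (HN' : ~ exists M, extr_idx le (cadm (fun t => RtoC (a t)) n)
                          (fun k => Cmod (RtoC (a k))) n M).
      { intros [M HM]. apply HN. exists M. apply extr_R; auto. }
      specialize (H2 HN').
      destruct (ray_lim s Th _ _ _ Hray Hs Hfg H2) as [L _]. apply HG. exact L.
Qed.


Theorem mainTheorem5 :
  (* F = C, part (1): cos Theta > 0, |alpha| -> infinity along arg alpha = Theta *)
  (forall Theta : R, 0 < cos Theta ->
     (exists add : C -> C -> C,
        (forall a b : C,
           clim Theta (fun alpha => ceps_inv alpha (ceps alpha a + ceps alpha b)%C) (add a b))
        /\ nonassoc_field add Cmult)
     /\
     (forall (n : nat) (a : nat -> C),
        (forall M : nat, extr_idx Rle (cadm a n) (fun k => Cmod (a k)) n M ->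
           clim Theta (fun alpha => ceps_inv alpha (csum (fun k => ceps alpha (a k)) n))
                (cvalue Theta a n M))
        /\
        ((~ exists M : nat, extr_idx Rle (cadm a n) (fun k => Cmod (a k)) n M) ->
           clim Theta (fun alpha => ceps_inv alpha (csum (fun k => ceps alpha (a k)) n))
                (RtoC 0))))
  /\
  (* F = C, part (2): cos Theta < 0 *)
  (forall Theta : R, cos Theta < 0 ->
     (exists add : C -> C -> C,
        (forall a b : C,
           clim Theta (fun alpha => ceps_inv alpha (ceps alpha a + ceps alpha b)%C) (add a b))
        /\ nonassoc_field add Cmult)
     /\
     (forall (n : nat) (a : nat -> C),
        (forall m : nat, extr_idx Rge (cadm a n) (fun k => Cmod (a k)) n m ->
           clim Theta (fun alpha => ceps_inv alpha (csum (fun k => ceps alpha (a k)) n))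
                (cvalue Theta a n m))
        /\
        ((~ exists m : nat, extr_idx Rge (cadm a n) (fun k => Cmod (a k)) n m) ->
           clim Theta (fun alpha => ceps_inv alpha (csum (fun k => ceps alpha (a k)) n))
                (RtoC 0))))
  /\
  (* F = R, part (1): Theta = 0, alpha -> +infinity (r_M^{-i tan 0} = 1) *)
  ((exists add : R -> R -> R,
      (forall a b : R,
         filterlim (fun alpha => reps_inv alpha (reps alpha a + reps alpha b))
           (Rbar_locally p_infty) (locally (add a b)))
      /\ nonassoc_field add Rmult)
   /\
   (forall (n : nat) (a : nat -> R),
      (forall M : nat, extr_idx Rle (radm a n) (fun k => Rabs (a k)) n M ->
         filterlim (fun alpha => reps_inv alpha (rsum (fun k => reps alpha (a k)) n))
           (Rbar_locally p_infty) (locally (Rabs (a M) * rs a n M)))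
      /\
      ((~ exists M : nat, extr_idx Rle (radm a n) (fun k => Rabs (a k)) n M) ->
         filterlim (fun alpha => reps_inv alpha (rsum (fun k => reps alpha (a k)) n))
           (Rbar_locally p_infty) (locally 0))))
  /\
  (* F = R, part (2): Theta = pi, i.e. alpha -> -infinity (r_m^{-i tan pi} = 1) *)
  ((exists add : R -> R -> R,
      (forall a b : R,
         filterlim (fun alpha => reps_inv alpha (reps alpha a + reps alpha b))
           (Rbar_locally m_infty) (locally (add a b)))
      /\ nonassoc_field add Rmult)
   /\
   (forall (n : nat) (a : nat -> R),
      (forall m : nat, extr_idx Rge (radm a n) (fun k => Rabs (a k)) n m ->
         filterlim (fun alpha => reps_inv alpha (rsum (fun k => reps alpha (a k)) n))
           (Rbar_locally m_infty) (locally (Rabs (a m) * rs a n m)))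
      /\
      ((~ exists m : nat, extr_idx Rge (radm a n) (fun k => Rabs (a k)) n m) ->
         filterlim (fun alpha => reps_inv alpha (rsum (fun k => reps alpha (a k)) n))
           (Rbar_locally m_infty) (locally 0)))).
Proof.
  split; [|split; [|split]].
  - intros Th Hc. apply (complex_part Th Rle).
    + intro E; lra.
    + apply sign1; auto.
    + intros n a. apply extr_exists_le.
  - intros Th Hc. apply (complex_part Th Rge).
    + intro E; lra.
    + apply sign2; auto.
    + intros n a. apply extr_exists_ge.
  - apply (real_part 1 0 Rle).
    + intro rho. unfold cis. rewrite cos_0, sin_0. apply C_ext; simpl; ring.
    + lra.
    + apply tan_0.
    + rewrite cos_0; lra.
    + apply sign1. rewrite cos_0; lra.
    + intros n a. apply extr_exists_le.
    + intros f L H. apply lim_pinf; auto.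
  - apply (real_part (-1) PI Rge).
    + intro rho. unfold cis. rewrite cos_PI, sin_PI. apply C_ext; simpl; ring.
    + lra.
    + apply tan_PI.
    + rewrite cos_PI; lra.
    + apply sign2. rewrite cos_PI; lra.
    + intros n a. apply extr_exists_ge.
    + intros f L H. apply lim_minf; auto.
Qed.
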